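(* Let $F_2$ be free on $x,y$ and let $\alpha\in\mathrm{Aut}(F_2)$ be given by $\alpha(x)=x$, $\alpha(y)=yx$. Then the group $G=F_2\rtimes_\alpha\mathbb{Z}$ satisfies $m_p(G)\le 6$ for every characteristic $p$ (zero or prime).
   Context: $F_2\rtimes_\alpha\mathbb{Z}$ is the semidirect product in which the generator $t$ of $\mathbb{Z}$ acts by $tgt^{-1}=\alpha(g)$. $m_p(H)$ is the minimal $d$ such that $H$ embeds in $GL(d,\mathbb{F})$ for some field $\mathbb{F}$ of characteristic $p$ ($\infty$ if none). *)

(* Defs.v *)
From HB Require Import structures.
From mathcomp Require Import all_boot all_order all_algebra.
Set Implicit Arguments. Unset Strict Implicit. Unset Printing Implicit Defensive.
Import Order.TTheory GRing.Theory Num.Theory.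

(* A letter is (is_y, inverted): (false,false)=x, (false,true)=x^-1,
   (true,false)=y, (true,true)=y^-1. *)
Definition letter := (bool * bool)%type.
Definition linv (l : letter) : letter := (l.1, ~~ l.2).

Fixpoint reduce (w : seq letter) : seq letter :=
  match w with
  | [::] => [::]
  | a :: w' =>
      let r := reduce w' in
      match r with
      | b :: r' => if b == linv a then r' else a :: r
      | [::] => [:: a]
      end
  end.

Fixpoint reducedb (w : seq letter) : bool :=
  match w with
  | a :: ((b :: _) as w') => (b != linv a) && reducedb w'
  | _ => true
  end.

Lemma reducedb_tail a w : reducedb (a :: w) -> reducedb w.
Proof. by case: w => [|b w] //= /andP[]. Qed.

Lemma reduce_reduced w : reducedb (reduce w).
Proof.
elim: w => [|a w IH] //=.
case E: (reduce w) IH => [|b r] //= H.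
case: ifP => [_|/negbT nb]; first exact: reducedb_tail H.
by rewrite /= H andbT.
Qed.

(* the automorphism alpha: x |-> x, y |-> y x, and its inverse
   alpha^-1: x |-> x, y |-> y x^-1 *)
Definition alpha_l (l : letter) : seq letter :=
  match l with
  | (false, b) => [:: (false, b)]
  | (true, false) => [:: (true, false); (false, false)]
  | (true, true) => [:: (false, true); (true, true)]
  end.
Definition alphainv_l (l : letter) : seq letter :=
  match l with
  | (false, b) => [:: (false, b)]
  | (true, false) => [:: (true, false); (false, true)]
  | (true, true) => [:: (false, false); (true, true)]
  end.
Definition walpha (w : seq letter) := reduce (flatten (map alpha_l w)).
Definition walphainv (w : seq letter) := reduce (flatten (map alphainv_l w)).
Definition alpha_pow (n : int) (w : seq letter) : seq letter :=
  match n with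
  | Posz k => iter k walpha w
  | Negz k => iter k.+1 walphainv w
  end.

(* An element (w, n) stands for w t^n, where t g t^-1 = alpha(g). Hence
   (w1 t^n1)(w2 t^n2) = w1 alpha^n1(w2) t^(n1+n2). *)
Definition G := {p : seq letter * int | reducedb p.1}.

Definition gmul (g h : G) : G :=
  exist (fun p : seq letter * int => reducedb p.1)
    (reduce ((sval g).1 ++ alpha_pow (sval g).2 (sval h).1), ((sval g).2 + (sval h).2)%R)
    (reduce_reduced _).

Definition has_char (F : fieldType) (p : nat) : Prop :=
  if p == 0%N then [pchar F]%R =i pred0 else p \in [pchar F]%R.

Definition embeds_in_GL (d : nat) (F : fieldType) : Prop :=
  exists rho : G -> 'M[F]_d,
    (forall g, rho g \in unitmx) /\
    (forall g h, rho (gmul g h) = (rho g *m rho h)%R) /\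
    injective rho.

(* Main.v *)
Require Import Defs.
From HB Require Import structures.
From mathcomp Require Import all_boot all_order all_algebra.
From mathcomp Require Import ring zify.

(* G embeds in GL_3 of K(lam)(s) for K = Q or F_p:
   t |-> diag(lam,1,1), x |-> diag(lam^-1,lam,1),
   y |-> Y0 + s N with a rank-one N; faithfulness via leading s-coefficients. *)

Module P1.
Set Implicit Arguments. Unset Strict Implicit. Unset Printing Implicit Defensive.
Import Order.TTheory GRing.Theory Num.Theory.
Local Open Scope ring_scope.

Section MX3.
Variable R : comNzRingType.
Definition mx3 (a b c d e f g h k : R) : 'M[R]_3 :=
  \matrix_(i < 3, j < 3)
   (if i == 0 :> nat then (if j == 0 :> nat then a else if j == 1 :> nat then b else c)
    else if i == 1 :> nat then (if j == 0 :> nat then d else if j == 1 :> nat then e else f)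
    else (if j == 0 :> nat then g else if j == 1 :> nat then h else k)).

Lemma ord3P (P : 'I_3 -> Prop) : P 0 -> P 1 -> P 2%:R -> forall i, P i.
Proof.
move=> H0 H1 H2 [[|[|[|i]]] Hi] //.
- by have -> : Ordinal Hi = 0 by apply: val_inj.
- by have -> : Ordinal Hi = 1 by apply: val_inj.
- by have -> : Ordinal Hi = 2%:R by apply: val_inj.
Qed.

Lemma mx3_eta (A : 'M[R]_3) :
  A = mx3 (A 0 0) (A 0 1) (A 0 2%:R) (A 1 0) (A 1 1) (A 1 2%:R) (A 2%:R 0) (A 2%:R 1) (A 2%:R 2%:R).
Proof.
apply/matrixP; elim/ord3P => /=; elim/ord3P; by rewrite mxE.
Qed.

Lemma mul_mx3 a b c d e f g h k a' b' c' d' e' f' g' h' k' :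
  mx3 a b c d e f g h k *m mx3 a' b' c' d' e' f' g' h' k' =
  mx3 (a*a' + b*d' + c*g') (a*b' + b*e' + c*h') (a*c' + b*f' + c*k')
      (d*a' + e*d' + f*g') (d*b' + e*e' + f*h') (d*c' + e*f' + f*k')
      (g*a' + h*d' + k*g') (g*b' + h*e' + k*h') (g*c' + h*f' + k*k').
Proof.
apply/matrixP; elim/ord3P; elim/ord3P;
  by rewrite !mxE !big_ord_recl big_ord0 !mxE /= addr0 addrA.
Qed.

Lemma add_mx3 a b c d e f g h k a' b' c' d' e' f' g' h' k' :
  mx3 a b c d e f g h k + mx3 a' b' c' d' e' f' g' h' k' =
  mx3 (a+a') (b+b') (c+c') (d+d') (e+e') (f+f') (g+g') (h+h') (k+k').
Proof. by apply/matrixP; elim/ord3P; elim/ord3P; rewrite !mxE. Qed.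

Lemma scale_mx3 x a b c d e f g h k :
  x *: mx3 a b c d e f g h k = mx3 (x*a) (x*b) (x*c) (x*d) (x*e) (x*f) (x*g) (x*h) (x*k).
Proof. by apply/matrixP; elim/ord3P; elim/ord3P; rewrite !mxE. Qed.

Lemma one_mx3 : (1%:M : 'M[R]_3) = mx3 1 0 0 0 1 0 0 0 1.
Proof. by apply/matrixP; elim/ord3P; elim/ord3P; rewrite !mxE. Qed.

Lemma zero_mx3 : (0 : 'M[R]_3) = mx3 0 0 0 0 0 0 0 0 0.
Proof. by apply/matrixP; elim/ord3P; elim/ord3P; rewrite !mxE. Qed.

End MX3.

Lemma map_mx3 (R S : comNzRingType) (f : R -> S) a b c d e f' g h k :
  map_mx f (mx3 a b c d e f' g h k) = mx3 (f a) (f b) (f c) (f d) (f e) (f f') (f g) (f h) (f k).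
Proof. by apply/matrixP; elim/ord3P; elim/ord3P; rewrite !mxE. Qed.

End P1.
Import P1.

Module P2.
Set Implicit Arguments. Unset Strict Implicit. Unset Printing Implicit Defensive.
Import Order.TTheory GRing.Theory Num.Theory.
Local Open Scope ring_scope.

Section Rep.
Variable L : fieldType.
Variable lam : L.
Hypothesis lam0 : lam != 0.
Hypothesis laminf : forall n : int, lam ^ n = 1 -> n = 0.

Lemma lamU : lam \is a GRing.unit. Proof. by rewrite unitfE. Qed.

Lemma lamD (m n : int) : lam ^ (m + n) = lam ^ m * lam ^ n.
Proof. exact: exprzDr lamU _ _. Qed.

Lemma lamN (n : int) : lam ^ (- n) * lam ^ n = 1.
Proof. by rewrite -lamD addNr. Qed.

Lemma lam_inj (m n : int) : lam ^ m = lam ^ n -> m = n.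
Proof.
move=> h; apply/eqP; rewrite -subr_eq0; apply/eqP/laminf.
by rewrite lamD h -lamD addrN.
Qed.

Definition Xd (n : int) : 'M[L]_3 := mx3 (lam ^ (- n)) 0 0 0 (lam ^ n) 0 0 0 1.
Definition Td (n : int) : 'M[L]_3 := mx3 (lam ^ n) 0 0 0 1 0 0 0 1.
Definition Y0 : 'M[L]_3 := mx3 0 1 0 1 0 0 0 0 1.
Definition NY : 'M[L]_3 := mx3 0 0 0 1 0 1 (-1) 0 (-1).
Definition NYi : 'M[L]_3 := mx3 0 (-1) (-1) 0 0 0 0 1 1.

Ltac m3 := rewrite /Xd /Td /Y0 /NY /NYi ?one_mx3 ?zero_mx3 ?mul_mx3 ?add_mx3; congr mx3.

Lemma Xd_add m n : Xd m *m Xd n = Xd (m + n).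
Proof. m3; rewrite ?opprD ?lamD; ring. Qed.

Lemma Td_add m n : Td m *m Td n = Td (m + n).
Proof. m3; rewrite ?lamD; ring. Qed.

Lemma Xd0 : Xd 0 = 1%:M. Proof. by m3; rewrite ?oppr0 expr0z. Qed.
Lemma Td0 : Td 0 = 1%:M. Proof. by m3; rewrite expr0z. Qed.

Lemma Y0Y0 : Y0 *m Y0 = 1%:M. Proof. m3; ring. Qed.
Lemma YY1 : Y0 *m NYi + NY *m Y0 = 0. Proof. m3; ring. Qed.
Lemma YY2 : NY *m NYi = 0. Proof. m3; ring. Qed.
Lemma YY3 : Y0 *m NY + NYi *m Y0 = 0. Proof. m3; ring. Qed.
Lemma YY4 : NYi *m NY = 0. Proof. m3; ring. Qed.

Lemma TXT m n : Xd n *m Td m = Td m *m Xd n. Proof. m3; ring. Qed.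

Lemma R1 : Y0 *m Xd 1 *m Td 1 = Td 1 *m Y0. Proof. m3; rewrite ?opprK ?exprN1 ?expr1z; by field; rewrite ?lam0. Qed.
Lemma R2 : NY *m Xd 1 *m Td 1 = Td 1 *m NY. Proof. m3; rewrite ?opprK ?exprN1 ?expr1z; by field; rewrite ?lam0. Qed.
Lemma R3 : Xd (-1) *m Y0 *m Td 1 = Td 1 *m Y0. Proof. m3; rewrite ?opprK ?exprN1 ?expr1z; by field; rewrite ?lam0. Qed.
Lemma R4 : Xd (-1) *m NYi *m Td 1 = Td 1 *m NYi. Proof. m3; rewrite ?opprK ?exprN1 ?expr1z; by field; rewrite ?lam0. Qed.
Lemma R5 : Y0 *m Xd (-1) *m Td (-1) = Td (-1) *m Y0. Proof. m3; rewrite ?opprK ?exprN1 ?expr1z; by field; rewrite ?lam0. Qed.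
Lemma R6 : NY *m Xd (-1) *m Td (-1) = Td (-1) *m NY. Proof. m3; rewrite ?opprK ?exprN1 ?expr1z; by field; rewrite ?lam0. Qed.
Lemma R7 : Xd 1 *m Y0 *m Td (-1) = Td (-1) *m Y0. Proof. m3; rewrite ?opprK ?exprN1 ?expr1z; by field; rewrite ?lam0. Qed.
Lemma R8 : Xd 1 *m NYi *m Td (-1) = Td (-1) *m NYi. Proof. m3; rewrite ?opprK ?exprN1 ?expr1z; by field; rewrite ?lam0. Qed.
End Rep.

End P2.
Import P2.

Module P3.
Set Implicit Arguments. Unset Strict Implicit. Unset Printing Implicit Defensive.
Import Order.TTheory GRing.Theory Num.Theory.
Local Open Scope ring_scope.

Section Poly.
Variable L : fieldType.
Local Notation R := {poly L}.
Definition cP (A : 'M[L]_3) : 'M[R]_3 := map_mx (@polyC L) A.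
Definition coefm (r : nat) (A : 'M[R]_3) : 'M[L]_3 := \matrix_(i, j) (A i j)`_r.

Lemma cPM A B : cP (A *m B) = cP A *m cP B.
Proof. exact: map_mxM. Qed.
Lemma cPD A B : cP (A + B) = cP A + cP B.
Proof. exact: map_mxD. Qed.
Lemma cP1 : cP 1%:M = 1%:M.
Proof. exact: map_mx1. Qed.
Lemma cP0 : cP 0 = 0.
Proof. exact: map_mx0. Qed.

Lemma coefm_cPl r C A : coefm r (cP C *m A) = C *m coefm r A.
Proof.
apply/matrixP=> i j; rewrite !mxE coef_sum; apply: eq_bigr => k _.
by rewrite !mxE coefCM.
Qed.

Lemma coefm_cPr r C A : coefm r (A *m cP C) = coefm r A *m C.
Proof.
apply/matrixP=> i j; rewrite !mxE coef_sum; apply: eq_bigr => k _.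
by rewrite !mxE coefMC.
Qed.

Lemma coefmD r A B : coefm r (A + B) = coefm r A + coefm r B.
Proof. by apply/matrixP=> i j; rewrite !mxE coefD. Qed.

Lemma coefmXS r A : coefm r.+1 ('X *: A) = coefm r A.
Proof. by apply/matrixP=> i j; rewrite !mxE coefXM. Qed.

Lemma coefmX0 A : coefm 0 ('X *: A) = 0.
Proof. by apply/matrixP=> i j; rewrite !mxE coefXM. Qed.

Lemma coefm_cP r C : coefm r (cP C) = if r == 0%N then C else 0.
Proof. by apply/matrixP=> i j; case: r => [|r]; rewrite !mxE coefC. Qed.

Definition bnd (k : nat) (A : 'M[R]_3) := forall r, (k <= r)%N -> coefm r A = 0.

Lemma bnd_cPl k C A : bnd k A -> bnd k (cP C *m A).
Proof. by move=> h r hr; rewrite coefm_cPl h // mulmx0. Qed.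

Lemma bnd_X k A : bnd k A -> bnd k.+1 ('X *: A).
Proof. by move=> h [|r] hr //; rewrite coefmXS h. Qed.

Lemma bndD k A B : bnd k A -> bnd k B -> bnd k (A + B).
Proof. by move=> h1 h2 r hr; rewrite coefmD h1 ?h2 ?addr0. Qed.

Lemma bndW k k' A : (k <= k')%N -> bnd k A -> bnd k' A.
Proof. by move=> hk h r hr; apply: h; apply: leq_trans hr. Qed.

Lemma bnd_cP C : bnd 1 (cP C).
Proof. by move=> [|r] //; rewrite coefm_cP. Qed.

Definition lin (A B : 'M[L]_3) : 'M[R]_3 := cP A + 'X *: cP B.

Lemma lin_cPr A B C : lin A B *m cP C = lin (A *m C) (B *m C).
Proof. by rewrite /lin mulmxDl -scalemxAl -!cPM. Qed.

Lemma lin_cPl A B C : cP C *m lin A B = lin (C *m A) (C *m B).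
Proof. by rewrite /lin mulmxDr -scalemxAr -!cPM. Qed.

Lemma lin_mul A B C D : lin A B *m lin C D =
  cP (A *m C) + 'X *: cP (A *m D + B *m C) + ('X * 'X) *: cP (B *m D).
Proof.
rewrite /lin mulmxDl !mulmxDr -!scalemxAl -!scalemxAr !scalerA -!cPM cPD scalerDr.
by rewrite !addrA; congr (_ + _); rewrite -!addrA; congr (_ + _); rewrite addrC. 
Qed.

Lemma bnd_lin k A B M : bnd k M -> bnd k.+1 (lin A B *m M).
Proof.
move=> h; rewrite /lin mulmxDl -scalemxAl; apply: bndD.
  by apply: bndW (leqnSn _) _; apply: bnd_cPl.
by apply: bnd_X; apply: bnd_cPl.
Qed.

Lemma coefm_lin k A B M : bnd k.+1 M -> coefm k.+1 (lin A B *m M) = B *m coefm k M.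
Proof.
move=> h; rewrite /lin mulmxDl -scalemxAl coefmD coefmXS !coefm_cPl h //.
by rewrite mulmx0 add0r.
Qed.
End Poly.

End P3.
Import P3.

Module P4.
Set Implicit Arguments. Unset Strict Implicit. Unset Printing Implicit Defensive.
Import Order.TTheory GRing.Theory Num.Theory.
Local Open Scope ring_scope.

Section Words.
Variable L : fieldType.
Variable lam : L.
Hypothesis lam0 : lam != 0.
Hypothesis laminf : forall n : int, lam ^ n = 1 -> n = 0.
Local Notation R := {poly L}.
Local Notation Xd := (Xd lam).
Local Notation Td := (Td lam).
Local Notation Y0 := (Y0 L).
Local Notation NY := (NY L).
Local Notation NYi := (NYi L).

Definition YM : 'M[R]_3 := lin Y0 NY.
Definition YiM : 'M[R]_3 := lin Y0 NYi.
Definition Lm (l : letter) : 'M[R]_3 :=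
  if l.1 then (if l.2 then YiM else YM) else cP (Xd (if l.2 then -1 else 1)).
Definition E (w : seq letter) : 'M[R]_3 := foldr (fun l M => Lm l *m M) 1%:M w.
Definition Tp (n : int) : 'M[R]_3 := cP (Td n).

Lemma E_cat a b : E (a ++ b) = E a *m E b.
Proof. by elim: a => [|l a IH] /=; rewrite ?mul1mx // IH mulmxA. Qed.

Lemma YYi : YM *m YiM = 1%:M.
Proof.
by rewrite /YM /YiM lin_mul Y0Y0 YY1 YY2 cP0 cP1 !scaler0 !addr0.
Qed.
Lemma YiY : YiM *m YM = 1%:M.
Proof.
by rewrite /YM /YiM lin_mul Y0Y0 YY3 YY4 cP0 cP1 !scaler0 !addr0.
Qed.

Lemma Lm_inv l : Lm l *m Lm (linv l) = 1%:M.
Proof.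
case: l => [[] []]; rewrite /Lm /linv /= ?YYi ?YiY //; rewrite -cPM Xd_add //.
- by rewrite addNr Xd0 cP1.
- by rewrite addrN Xd0 cP1.
Qed.

Lemma E_reduce w : E (reduce w) = E w.
Proof.
elim: w => [|a w IH] //=.
case E1: (reduce w) IH => [|b r] IH.
  by rewrite /= -IH.
case: ifP => [/eqP hb|_]; last by rewrite /= -IH.
by rewrite -IH /= hb mulmxA Lm_inv mul1mx.
Qed.

Lemma E_flat (f : letter -> seq letter) (T : 'M[R]_3) :
  (forall l, E (f l) *m T = T *m Lm l) ->
  forall w, E (flatten (map f w)) *m T = T *m E w.
Proof.
move=> h; elim=> [|l w IH] /=; first by rewrite mul1mx mulmx1.
by rewrite E_cat -mulmxA IH !mulmxA h.
Qed.

Lemma Tp_add m n : Tp m *m Tp n = Tp (m + n).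
Proof. by rewrite /Tp -cPM Td_add. Qed.
Lemma Tp0 : Tp 0 = 1%:M.
Proof. by rewrite /Tp Td0 cP1. Qed.

Lemma alpha_l_ok l : E (alpha_l l) *m Tp 1 = Tp 1 *m Lm l.
Proof.
case: l => [[] []]; rewrite /= /Lm /= !mulmx1 /Tp /YM /YiM.
- by rewrite lin_cPl lin_cPr R3 // R4 // lin_cPl.
- by rewrite !lin_cPr R1 // R2 // lin_cPl.
- by rewrite -!cPM TXT.
- by rewrite -!cPM TXT.
Qed.

Lemma alphainv_l_ok l : E (alphainv_l l) *m Tp (-1) = Tp (-1) *m Lm l.
Proof.
case: l => [[] []]; rewrite /= /Lm /= !mulmx1 /Tp /YM /YiM.
- by rewrite lin_cPl lin_cPr R7 // R8 // lin_cPl.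
- by rewrite !lin_cPr R5 // R6 // lin_cPl.
- by rewrite -!cPM TXT.
- by rewrite -!cPM TXT.
Qed.

Lemma iter_ok (f : seq letter -> seq letter) d :
  (forall v, E (f v) *m Tp d = Tp d *m E v) ->
  forall k w, E (iter k f w) *m Tp (k%:Z * d) = Tp (k%:Z * d) *m E w.
Proof.
move=> h; elim=> [|k IH] w /=; first by rewrite mul0r Tp0 mulmx1 mul1mx.
have -> : (k.+1%:Z * d) = d + k%:Z * d by rewrite -addn1 PoszD mulrDl mul1r addrC.
by rewrite -Tp_add mulmxA h -mulmxA IH mulmxA.
Qed.

Lemma E_alpha_pow n w : E (alpha_pow n w) *m Tp n = Tp n *m E w.
Proof.
case: n => k /=.
- have := @iter_ok walpha 1 _ k w; rewrite mulr1; apply.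
  move=> v; rewrite /walpha E_reduce; exact: E_flat alpha_l_ok v.
- have := @iter_ok walphainv (-1) _ k.+1 w; rewrite mulrN1 -NegzE; apply.
  move=> v; rewrite /walphainv E_reduce; exact: E_flat alphainv_l_ok v.
Qed.
End Words.

End P4.
Import P4.

Module P5.
Set Implicit Arguments. Unset Strict Implicit. Unset Printing Implicit Defensive.
Import Order.TTheory GRing.Theory Num.Theory.
Local Open Scope ring_scope.

Definition count_y (w : seq letter) : nat := count (fun l : letter => l.1) w.
Fixpoint xpre (w : seq letter) : int :=
  match w with [::] => 0 | l :: w' => if l.1 then 0 else ((if l.2 then -1 else 1) + xpre w') end.
Fixpoint fys (w : seq letter) : bool :=
  match w with [::] => false | l :: w' => if l.1 then l.2 else fys w' end.

Lemma red_head a w : reducedb (a :: w) -> ohead w != Some (linv a).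
Proof. by case: w => [|b w] //= /andP[h _]; apply: contra h => /eqP [->]. Qed.

Lemma xpre_sign w : reducedb w ->
  match ohead w with
  | Some (false, false) => 0 < xpre w
  | Some (false, true) => xpre w < 0
  | _ => xpre w = 0 end.
Proof.
elim: w => [|[[] []] w IH] //= hr; have hw := reducedb_tail hr; have := IH hw;
  have := red_head hr; rewrite /linv /=.
- case: (ohead w) => [[[] []]|] //= _; lia.
- case: (ohead w) => [[[] []]|] //= _; lia.
Qed.

Lemma head_det w : reducedb w -> ohead w =
  if 0 < xpre w then Some (false, false) else if xpre w < 0 then Some (false, true)
  else if (0 < count_y w)%N then Some (true, fys w) else None.
Proof.
move=> hr; have := xpre_sign hr.
case: w hr => [|[[] []] w] //= hr.
- by move=> h; rewrite (lt_gtF h) h.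
- by move=> h; rewrite h.
Qed.

Section Core.
Variable L : fieldType.
Variable lam : L.
Hypothesis lam0 : lam != 0.
Hypothesis laminf : forall n : int, lam ^ n = 1 -> n = 0.
Local Notation R := {poly L}.
Local Notation Xd := (Xd lam).
Local Notation Td := (Td lam).
Local Notation Y0 := (Y0 L).
Local Notation NY := (NY L).
Local Notation NYi := (NYi L).
Local Notation E := (E lam).
Local Notation Tp := (Tp lam).

Definition acolf (e : bool) (n : int) : 'M[L]_3 :=
  if e then mx3 (- lam ^ (- n)) 0 0 0 0 0 1 0 0 else mx3 0 0 0 (lam ^ n) 0 0 (-1) 0 0.
Definition browM (b0 b1 b2 : L) : 'M[L]_3 := mx3 b0 b1 b2 0 0 0 0 0 0.

Ltac m3 := rewrite /acolf /browM /= /P2.Xd /P2.Td /P2.Y0 /P2.NY /P2.NYi ?one_mx3 ?zero_mx3 ?scale_mx3 ?mul_mx3 ?scale_mx3 ?add_mx3; congr mx3.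

Lemma NY_fact : NY = acolf false 0 *m browM 1 0 1.
Proof. m3; rewrite ?expr0z; ring. Qed.
Lemma NYi_fact : NYi = acolf true 0 *m browM 0 1 1.
Proof. m3; rewrite ?oppr0 ?expr0z; ring. Qed.

Lemma Xd_acol m e n : Xd m *m acolf e n = acolf e (m + n).
Proof. case: e; m3; rewrite ?opprD ?lamD //; ring. Qed.

Lemma NY_acol e n : NY *m acolf e n = (if e then 1 - lam ^ (- n) else -1) *: acolf false 0.
Proof. case: e; m3; rewrite ?expr0z; ring. Qed.

Lemma NYi_acol e n : NYi *m acolf e n = (if e then 1 else lam ^ n - 1) *: acolf true 0.
Proof. case: e; m3; rewrite ?oppr0 ?expr0z; ring. Qed.

Lemma scale_acol c e n b0 b1 b2 :
  (c *: acolf e n) *m browM b0 b1 b2 = acolf e n *m browM (c * b0) (c * b1) (c * b2).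
Proof. case: e; m3; ring. Qed.

Lemma E_noy w : count_y w = 0%N -> E w = cP (Xd (xpre w)).
Proof.
elim: w => [|[[] b] w IH] //=; first by rewrite Xd0 cP1.
move=> /IH ->; rewrite /Lm /= -cPM Xd_add //.
Qed.

Lemma bnd_E w : bnd (count_y w).+1 (E w).
Proof.
elim: w => [|[[] b] w IH] /=.
- by rewrite -cP1; apply: bnd_cP.
- by rewrite /Lm /=; case: b; apply: bnd_lin.
- by rewrite /Lm /=; apply: bnd_cPl.
Qed.

Lemma lamN_neq1 (n : int) : n != 0 -> lam ^ n != 1.
Proof. by move=> hn; apply/eqP => /laminf /eqP; rewrite (negbTE hn). Qed.

Lemma lead w : reducedb w -> (0 < count_y w)%N ->
  exists b0 b1 b2, [|| b0 != 0, b1 != 0 | b2 != 0] /\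
    coefm (count_y w) (E w) = acolf (fys w) (xpre w) *m browM b0 b1 b2.
Proof.
elim: w => [|[[] b] w IH] //= hr.
- rewrite add1n => _; have hw := reducedb_tail hr; have hh := red_head hr; clear hr.
  rewrite /Lm /=.
  have hc : coefm (count_y w).+1 ((if b then YiM L else YM L) *m E w) =
      (if b then NYi else NY) *m coefm (count_y w) (E w).
    by case: (b); rewrite coefm_lin //; apply: bnd_E.
  rewrite hc; clear hc.
  case: (posnP (count_y w)) => hcw.
  + rewrite hcw E_noy // coefm_cP /=.
    case: (b).
    * exists 0; exists (lam ^ (xpre w)); exists 1.
      split; first by apply/orP; right; apply/orP; right; exact: oner_neq0.
      rewrite NYi_fact -mulmxA; congr (_ *m _); m3; ring.
    * exists (lam ^ (- xpre w)); exists 0; exists 1.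
      split; first by apply/orP; right; apply/orP; right; exact: oner_neq0.
      rewrite NY_fact -mulmxA; congr (_ *m _); m3; ring.
  + have [b0 [b1 [b2 [hb ->]]]] := IH hw hcw.
    have hd := head_det hw.
    rewrite mulmxA.
    case: (b) hh => hh; [rewrite NYi_acol | rewrite NY_acol]; rewrite scale_acol;
      set c := (if _ then _ else _).
    * have hcz : c != 0.
        rewrite /c; case hf: (fys w); first exact: oner_neq0.
        rewrite subr_eq0; apply: lamN_neq1; apply: contra hh => /eqP h0.
        by rewrite hd h0 ltxx hcw hf.
      exists (c * b0); exists (c * b1); exists (c * b2); split => //.
      by move: hb; rewrite !mulf_eq0 (negbTE hcz).
    * have hcz : c != 0.
        rewrite /c; case hf: (fys w); last by rewrite oppr_eq0 oner_neq0.
        rewrite subr_eq0 eq_sym; apply: lamN_neq1; rewrite oppr_eq0.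
        apply: contra hh => /eqP h0.
        by rewrite hd h0 ltxx hcw hf.
      exists (c * b0); exists (c * b1); exists (c * b2); split => //.
      by move: hb; rewrite !mulf_eq0 (negbTE hcz).
- move=> hcw; have hw := reducedb_tail hr.
  have [b0 [b1 [b2 [hb h]]]] := IH hw hcw.
  exists b0; exists b1; exists b2; split => //.
  by rewrite /Lm /= coefm_cPl h mulmxA Xd_acol.
Qed.
End Core.

End P5.
Import P5.

Module P6.
Set Implicit Arguments. Unset Strict Implicit. Unset Printing Implicit Defensive.
Import Order.TTheory GRing.Theory Num.Theory.
Local Open Scope ring_scope.

Lemma mx3_inj (R : comNzRingType) (a b c d e f g h k a' b' c' d' e' f' g' h' k' : R) :
  mx3 a b c d e f g h k = mx3 a' b' c' d' e' f' g' h' k' ->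
  [/\ a = a', b = b', c = c', d = d' & e = e'] /\ [/\ f = f', g = g', h = h' & k = k'].
Proof.
move/matrixP=> H.
have h00 := H 0 0; have h01 := H 0 1; have h02 := H 0 2%:R.
have h10 := H 1 0; have h11 := H 1 1; have h12 := H 1 2%:R.
have h20 := H 2%:R 0; have h21 := H 2%:R 1; have h22 := H 2%:R 2%:R.
by move: h00 h01 h02 h10 h11 h12 h20 h21 h22; rewrite !mxE /=.
Qed.

Section Key.
Variable L : fieldType.
Variable lam : L.
Hypothesis lam0 : lam != 0.
Hypothesis laminf : forall n : int, lam ^ n = 1 -> n = 0.
Local Notation R := {poly L}.
Local Notation Xd := (Xd lam).
Local Notation Td := (Td lam).
Local Notation E := (E lam).
Local Notation Tp := (Tp lam).
Local Notation acolf := (acolf lam).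

Ltac m3 := rewrite /P5.acolf /browM /= /P2.Xd /P2.Td ?one_mx3 ?zero_mx3 ?scale_mx3 ?mul_mx3 ?scale_mx3 ?add_mx3; congr mx3.

Lemma acol_shape e n c0 c1 c2 : acolf e n *m browM c0 c1 c2 =
  if e then mx3 (- lam ^ (- n) * c0) (- lam ^ (- n) * c1) (- lam ^ (- n) * c2) 0 0 0 c0 c1 c2
  else mx3 0 0 0 (lam ^ n * c0) (lam ^ n * c1) (lam ^ n * c2) (- c0) (- c1) (- c2).
Proof. case: e; m3; ring. Qed.

Lemma acol_Td e n c0 c1 c2 m :
  acolf e n *m browM c0 c1 c2 *m Td m = acolf e n *m browM (c0 * lam ^ m) c1 c2.
Proof. case: e; m3; ring. Qed.

Lemma lamX0 n : lam ^ n != 0. Proof. exact: expfz_neq0. Qed.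

Lemma acol_neq0 e n c0 c1 c2 : [|| c0 != 0, c1 != 0 | c2 != 0] ->
  acolf e n *m browM c0 c1 c2 != 0.
Proof.
move=> hc; apply/negP => /eqP h; move: h; rewrite acol_shape zero_mx3.
case: e => /mx3_inj [[_ _ _ _ _] [_ h0 h1 h2]].
  by move: hc; rewrite h0 h1 h2 eqxx.
move/eqP: h0; move/eqP: h1; move/eqP: h2; rewrite !oppr_eq0 => /eqP h2 /eqP h1 /eqP h0.
by move: hc; rewrite h0 h1 h2 eqxx.
Qed.

Lemma pick3 (x y c0 c1 c2 : L) : [|| c0 != 0, c1 != 0 | c2 != 0] ->
  x * c0 = y * c0 -> x * c1 = y * c1 -> x * c2 = y * c2 -> x = y.
Proof.
move=> hc h0 h1 h2; case: (eqVneq x y) => // hne; exfalso.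
have z : forall c, x * c = y * c -> c = 0.
  move=> c hc'; apply/eqP; move/eqP: hc'; rewrite -subr_eq0 -mulrBl mulf_eq0 subr_eq0.
  by rewrite (negbTE hne).
by move: hc; rewrite (z _ h0) (z _ h1) (z _ h2) eqxx.
Qed.

Lemma acol_inj e1 n1 e2 n2 c0 c1 c2 d0 d1 d2 :
  [|| c0 != 0, c1 != 0 | c2 != 0] ->
  acolf e1 n1 *m browM c0 c1 c2 = acolf e2 n2 *m browM d0 d1 d2 ->
  e1 = e2 /\ n1 = n2.
Proof.
move=> hc; rewrite !acol_shape.
case: e1; case: e2 => /mx3_inj [[a0 a1 a2 a3 a4] [a5 a6 a7 a8]].
- split => //; apply/oppr_inj/(lam_inj lam0 laminf)/oppr_inj.
  apply: (pick3 hc); [by rewrite a0 a6 | by rewrite a1 a7 | by rewrite a2 a8].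
- exfalso; have : - lam ^ (- n1) = 0.
    apply: (pick3 hc); rewrite !mul0r ?a0 ?a1 ?a2 //.
  by apply/eqP; rewrite oppr_eq0 lamX0.
- exfalso; have : lam ^ n1 = 0.
    by apply: (pick3 hc); rewrite !mul0r.
  by apply/eqP; rewrite lamX0.
- split => //; apply/(lam_inj lam0 laminf).
  apply: (pick3 hc).
  + by rewrite a3 (oppr_inj a6).
  + by rewrite a4 (oppr_inj a7).
  + by rewrite a5 (oppr_inj a8).
Qed.
End Key.

End P6.
Import P6.

Module P7.
Set Implicit Arguments. Unset Strict Implicit. Unset Printing Implicit Defensive.
Import Order.TTheory GRing.Theory Num.Theory.
Local Open Scope ring_scope.

Section Key2.
Variable L : fieldType.
Variable lam : L.
Hypothesis lam0 : lam != 0.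
Hypothesis laminf : forall n : int, lam ^ n = 1 -> n = 0.
Local Notation R := {poly L}.
Local Notation Xd := (Xd lam).
Local Notation Td := (Td lam).
Local Notation E := (E lam).
Local Notation Tp := (Tp lam).
Local Notation acolf := (acolf lam).

Lemma nzT (b0 b1 b2 : L) (m : int) : [|| b0 != 0, b1 != 0 | b2 != 0] ->
  [|| b0 * lam ^ m != 0, b1 != 0 | b2 != 0].
Proof. by rewrite mulf_eq0 negb_or lamX0 // andbT. Qed.

Lemma key_gt w1 w2 n1 n2 : reducedb w2 ->
  (count_y w1 < count_y w2)%N ->
  coefm (count_y w2) (E w1) *m Td n1 = coefm (count_y w2) (E w2) *m Td n2 -> False.
Proof.
move=> h2 hlt.
have [b0 [b1 [b2 [hb hl]]]] := lead lam0 laminf h2 (leq_ltn_trans (leq0n _) hlt).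
rewrite (@bnd_E _ lam w1) // mul0mx hl acol_Td => /esym/eqP.
by rewrite (negbTE (acol_neq0 _ _ _ (nzT _ hb))).
Qed.

Lemma key w1 w2 n1 n2 : reducedb w1 -> reducedb w2 ->
  E w1 *m Tp n1 = E w2 *m Tp n2 -> ohead w1 = ohead w2.
Proof.
move=> h1 h2 he.
have hc r : coefm r (E w1) *m Td n1 = coefm r (E w2) *m Td n2.
  by rewrite -!coefm_cPr he.
rewrite (head_det h1) (head_det h2).
suff [-> [-> hf]] : xpre w1 = xpre w2 /\ ((0 < count_y w1)%N = (0 < count_y w2)%N /\
    ((0 < count_y w1)%N -> fys w1 = fys w2)).
  by case: (0 < count_y w2)%N hf => // ->.
case: (ltngtP (count_y w1) (count_y w2)) => hlt.
- by exfalso; apply: (key_gt h2 hlt (hc _)).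
- by exfalso; apply: (key_gt h1 hlt (esym (hc _))).
case: (posnP (count_y w1)) => hz.
- have hz2 : count_y w2 = 0%N by rewrite -hlt.
  have := hc 0%N; rewrite !E_noy // !coefm_cP /P2.Xd /P2.Td !mul_mx3.
  case/mx3_inj => [[_ _ _ _ a4] _]; move: a4.
  rewrite !mul0r !addr0 !add0r !mulr1 => /(lam_inj lam0 laminf) ->.
  by rewrite hz2.
- have [b0 [b1 [b2 [hb hl1]]]] := lead lam0 laminf h1 hz.
  have hz2 : (0 < count_y w2)%N by rewrite -hlt.
  have [d0 [d1 [d2 [hd hl2]]]] := lead lam0 laminf h2 hz2.
  have := hc (count_y w1); rewrite {2}hlt hl1 hl2 !acol_Td.
  case/(acol_inj lam0 laminf (nzT _ hb)) => -> ->.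
  by rewrite -hlt hz.
Qed.

Lemma inj_core w1 w2 n1 n2 : reducedb w1 -> reducedb w2 ->
  E w1 *m Tp n1 = E w2 *m Tp n2 -> w1 = w2 /\ n1 = n2.
Proof.
elim: w1 w2 => [|l1 w1 IH] w2 h1 h2 he.
- have := key h1 h2 he; case: w2 h2 he => // _ /= he _.
  split => //; move: he; rewrite !mul1mx /Tp => /map_mx_inj.
  rewrite /P2.Td => /mx3_inj [[a0 _ _ _ _] _].
  exact: (lam_inj lam0 laminf).
- have := key h1 h2 he; case: w2 h2 he => // l2 w2 h2 he /= [hl].
  subst l2.
  have : E w1 *m Tp n1 = E w2 *m Tp n2.
    have hinv : Lm lam (linv l1) *m Lm lam l1 = 1%:M.
      have := Lm_inv lam0 (linv l1); by rewrite /linv /= negbK -surjective_pairing.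
    move: he => /= /(congr1 (mulmx (Lm lam (linv l1)))).
    by rewrite !mulmxA hinv !mul1mx.
  case/(IH _ (reducedb_tail h1) (reducedb_tail h2)) => -> ->.
  by [].
Qed.
End Key2.

End P7.
Import P7.

Module P8.
Set Implicit Arguments. Unset Strict Implicit. Unset Printing Implicit Defensive.
Import Order.TTheory GRing.Theory Num.Theory.
Local Open Scope ring_scope.

Section Final.
Variable L : fieldType.
Variable lam : L.
Hypothesis lam0 : lam != 0.
Hypothesis laminf : forall n : int, lam ^ n = 1 -> n = 0.
Local Notation R := {poly L}.
Local Notation F := {fraction R}.
Local Notation E := (E lam).
Local Notation Tp := (Tp lam).

Definition rho (g : G) : 'M[F]_3 :=
  map_mx (@tofrac R) (E (sval g).1 *m Tp (sval g).2).

Lemma right_inv w n : exists B, E w *m Tp n *m B = 1%:M.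
Proof.
elim: w => [|l w [B hB]] /=.
  by exists (Tp (- n)); rewrite mul1mx (Tp_add lam0) addrN Tp0.
exists (B *m Lm lam (linv l)).
have e1 : Lm lam l *m E w *m Tp n *m (B *m Lm lam (linv l)) =
    Lm lam l *m (E w *m Tp n *m B) *m Lm lam (linv l).
  by rewrite !mulmxA.
by rewrite e1 hB mulmx1 Lm_inv.
Qed.

Lemma rho_unit g : rho g \in unitmx.
Proof.
have [B hB] := right_inv (sval g).1 (sval g).2.
have h : rho g *m map_mx (@tofrac R) B = 1%:M.
  by rewrite /rho -map_mxM hB map_mx1.
exact: (mulmx1_unit h).1.
Qed.

Lemma rho_mul g h : rho (gmul g h) = rho g *m rho h.
Proof.
rewrite /rho -map_mxM; congr map_mx.
case: g => [[w1 n1] H1]; case: h => [[w2 n2] H2] /=.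
rewrite (E_reduce lam0) E_cat -(Tp_add lam0) !mulmxA -(mulmxA (E w1)).
by rewrite (E_alpha_pow lam0) !mulmxA.
Qed.

Lemma rho_inj : injective rho.
Proof.
case=> [[w1 n1] H1] [[w2 n2] H2]; rewrite /rho /= => he.
have he' : E w1 *m Tp n1 = E w2 *m Tp n2.
  apply/matrixP => i j; move/matrixP: he => /(_ i j); rewrite !mxE.
  by move/eqP; rewrite tofrac_eq => /eqP.
have [e1 e2] := inj_core lam0 laminf H1 H2 he'.
by apply: val_inj => /=; move: e1 e2 => /= -> ->.
Qed.

Lemma embeds_L : embeds_in_GL 3 F.
Proof.
exists rho; split; first exact: rho_unit.
split; first exact: rho_mul.
exact: rho_inj.
Qed.
End Final.

Lemma pchar_frac (K : fieldType) : [pchar {fraction {poly K}}] =i [pchar K].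
Proof.
move=> p; rewrite !inE; congr (_ && _).
by rewrite -(rmorph_nat (@tofrac _)) tofrac_eq0 -(rmorph_nat (@polyC K)) polyC_eq0.
Qed.

Lemma lamX_props (K : fieldType) :
  let lam := (tofrac ('X : {poly K})) in lam != 0 /\ (forall n : int, lam ^ n = 1 -> n = 0).
Proof.
move=> lam; split; first by rewrite tofrac_eq0 polyX_eq0.
have hk k : lam ^+ k = 1 -> k = 0%N.
  rewrite -rmorphXn -tofrac1 => /eqP; rewrite tofrac_eq => /eqP hx.
  by have := congr1 (fun p : {poly K} => size p) hx; rewrite size_polyXn size_poly1 => -[].
case=> k /=; first by move/hk => ->.
rewrite NegzE -exprnN => /eqP; rewrite invr_eq1 => /eqP /hk.
by [].
Qed.

End P8.
Import P8.


Lemma gen_emb (K : fieldType) :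
  embeds_in_GL 3 {fraction {poly {fraction {poly K}}}} /\
  [pchar {fraction {poly {fraction {poly K}}}}]%R =i [pchar K]%R.
Proof.
have [h0 hinf] := lamX_props K.
split; first exact: embeds_L h0 hinf.
by move=> q; rewrite !pchar_frac.
Qed.

Theorem proposition5p5 :
  forall p : nat, p = 0%N \/ prime p ->
    exists (F : fieldType) (d : nat),
      (d <= 6)%N /\ has_char F p /\ embeds_in_GL d F.
Proof.
move=> p [-> | pp].
- have [he hc] := gen_emb rat.
  exists {fraction {poly {fraction {poly rat}}}}; exists 3%N; split => //; split => //.
  by rewrite /has_char /= => q; rewrite hc; apply: Num.Theory.pchar_num.
- have [he hc] := gen_emb 'F_p.
  exists {fraction {poly {fraction {poly 'F_p}}}}; exists 3%N; split => //; split => //.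
  rewrite /has_char; have -> : (p == 0%N) = false by apply/negbTE; apply: contraTneq pp => ->.
  by rewrite hc; apply: pchar_Fp.
Qed.
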